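(* The $k$ poles of a $k$-oriented Spherical Diagram do not all lie on a common great circle. Consequently, every attractor hull of a $k$-oriented SD has non-empty interior.
   Context: A geodesic arc on the unit sphere in $\mathbb R^3$ is the unique shortest curve joining two non-antipodal points. An arc $a$ blocks an arc $b$ (equivalently, $b$ hits $a$) if an endpoint of $b$ lies in the relative interior of $a$. A Spherical Diagram (SD) is a finite non-empty collection $\mathcal D$ of pairwise interior-disjoint geodesic arcs on the unit sphere such that each arc of $\mathcal D$ is blocked by arcs of $\mathcal D$ at each of its endpoints. An SD $\mathcal D$ is $k$-oriented if there exist a set $P$ of $k$ points on the unit sphere (poles), no two antipodal, and a function $f\colon\mathcal D\to P$ such that each arc $a\in\mathcal D$ lies on a great circle through $f(a)$ but contains neither $f(a)$ nor its antipode $-f(a)$ (the anti-pole of $f(a)$). An attractor of a $k$-oriented SD is a set of $k$ points, no two antipodal, chosen among its poles and anti-poles (i.e., one from each pair $\{p,-p\}$, $p\in P$). An attractor hull is the spherical convex hull of an attractor (which is the whole sphere if the attractor is not contained in any open hemisphere). *)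

(* Defs.v *)
From mathcomp Require Import all_boot all_order all_algebra.
From mathcomp Require Import reals.
Set Implicit Arguments. Unset Strict Implicit. Unset Printing Implicit Defensive.
Import Order.TTheory GRing.Theory Num.Theory.
Local Open Scope ring_scope.

Section Sphere.
Variable R : realType.

Definition vec := 'rV[R]_3.

Definition dot (u v : vec) : R := \sum_(i < 3) u 0 i * v 0 i.

Definition on_sphere (x : vec) : Prop := dot x x = 1.

(* A geodesic arc is given by its two endpoints (a, b): distinct,
   non-antipodal, on the unit sphere. *)
Definition sarc := (vec * vec)%type.

Definition arc_wf (e : sarc) : Prop :=
  on_sphere e.1 /\ on_sphere e.2 /\ e.1 <> e.2 /\ e.1 <> - e.2.

(* points of the (closed) shortest arc: radial projections onto the sphere of
   the segment [a, b] *)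
Definition arc_pt (e : sarc) (x : vec) : Prop :=
  on_sphere x /\ exists t lam : R, 0 <= t <= 1 /\ 0 < lam /\
    x = lam *: ((1 - t) *: e.1 + t *: e.2).

Definition arc_relint (e : sarc) (x : vec) : Prop :=
  on_sphere x /\ exists t lam : R, 0 < t < 1 /\ 0 < lam /\
    x = lam *: ((1 - t) *: e.1 + t *: e.2).

Definition great_circle (n : vec) (x : vec) : Prop :=
  on_sphere x /\ dot n x = 0.

Definition spherical_diagram (I : finType) (D : I -> sarc) : Prop :=
  (0 < #|I|)%N /\
  (forall i, arc_wf (D i)) /\
  (forall i j, i <> j -> forall x, arc_relint (D i) x -> ~ arc_relint (D j) x) /\
  (forall i, (exists j, arc_relint (D j) (D i).1) /\
             (exists j, arc_relint (D j) (D i).2)).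

(* (p, f) witnesses that D is k-oriented: p enumerates the set P of k poles
   (distinct, on the sphere, no two antipodal), f assigns a pole to each arc. *)
Definition k_oriented_by (I : finType) (D : I -> sarc) (k : nat)
    (p : 'I_k -> vec) (f : I -> 'I_k) : Prop :=
  (forall m, on_sphere (p m)) /\
  injective p /\
  (forall m m', p m <> - p m') /\
  (forall i, (exists n : vec, n <> 0 /\ great_circle n (p (f i)) /\
               (forall x, arc_pt (D i) x -> great_circle n x)) /\
             ~ arc_pt (D i) (p (f i)) /\ ~ arc_pt (D i) (- p (f i))).

Definition attractor (k : nat) (p : 'I_k -> vec) (s : 'I_k -> bool) (m : 'I_k) : vec :=
  if s m then p m else - p m.

Definition sph_hull (k : nat) (q : 'I_k -> vec) (x : vec) : Prop :=
  on_sphere x /\ exists c : 'I_k -> R, (forall m, 0 <= c m) /\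
    x = \sum_(m < k) c m *: q m.

Definition sph_nonempty_interior (S : vec -> Prop) : Prop :=
  exists x, S x /\ exists e : R, 0 < e /\
    forall y, on_sphere y -> dot (y - x) (y - x) < e -> S y.

End Sphere.

(* Main.v *)
Require Import Defs.
From mathcomp Require Import all_boot all_order all_algebra.
From mathcomp Require Import reals ring lra.
From Stdlib Require Import Classical.
Set Implicit Arguments. Unset Strict Implicit. Unset Printing Implicit Defensive.
Import Order.TTheory GRing.Theory Num.Theory.
Local Open Scope ring_scope.

Section S.
Variable R : realType.
Local Notation V := (vec R).
Definition i0 : 'I_3 := ord0.
Definition i1 : 'I_3 := @Ordinal 3 1 isT.
Definition i2 : 'I_3 := @Ordinal 3 2 isT.

Lemma dotE (u v : V) : dot u v = u 0 i0 * v 0 i0 + u 0 i1 * v 0 i1 + u 0 i2 * v 0 i2.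
Proof.
rewrite /dot !big_ord_recl big_ord0 addr0 addrA.
have -> : lift ord0 ord0 = i1 :> 'I_3 by apply: val_inj.
have -> : lift ord0 (lift ord0 ord0) = i2 :> 'I_3 by apply: val_inj.
by [].
Qed.

Lemma vecP (u v : V) : u 0 i0 = v 0 i0 -> u 0 i1 = v 0 i1 -> u 0 i2 = v 0 i2 -> u = v.
Proof.
move=> h0 h1 h2; apply/rowP => i.
case: i => [[|[|[|//]]] Hi].
- by have -> : Ordinal Hi = i0 by apply: val_inj.
- by have -> : Ordinal Hi = i1 by apply: val_inj.
- by have -> : Ordinal Hi = i2 by apply: val_inj.
Qed.

Definition mkv (a b c : R) : V := \row_(j < 3) [:: a; b; c]`_j.
Lemma mkv0 a b c : mkv a b c 0 i0 = a. Proof. by rewrite mxE. Qed.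
Lemma mkv1 a b c : mkv a b c 0 i1 = b. Proof. by rewrite mxE. Qed.
Lemma mkv2 a b c : mkv a b c 0 i2 = c. Proof. by rewrite mxE. Qed.

Definition cross (u v : V) : V :=
  mkv (u 0 i1 * v 0 i2 - u 0 i2 * v 0 i1) (u 0 i2 * v 0 i0 - u 0 i0 * v 0 i2)
      (u 0 i0 * v 0 i1 - u 0 i1 * v 0 i0).
Definition det (u v w : V) : R := dot (cross u v) w.

Ltac crd := rewrite /det /cross ?(dotE, mkv0, mkv1, mkv2, mxE).

Lemma det_mul (x y z u v w : V) :
  det x y z * det u v w =
  dot x u * (dot y v * dot z w - dot y w * dot z v)
  - dot x v * (dot y u * dot z w - dot y w * dot z u)
  + dot x w * (dot y u * dot z v - dot y v * dot z u).
Proof. crd. ring. Qed.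

Lemma perp_cross (n m z : V) :
  (dot (cross n m) (cross n m)) *: z = (dot z (cross n m)) *: cross n m
     + (dot n z) *: cross m (cross n m) - (dot m z) *: cross n (cross n m).
Proof. apply: vecP; crd; ring. Qed.


Lemma dotC (u v : V) : dot u v = dot v u. Proof. crd; ring. Qed.
Lemma dotDr (u v w : V) : dot u (v + w) = dot u v + dot u w. Proof. crd; ring. Qed.
Lemma dotBr (u v w : V) : dot u (v - w) = dot u v - dot u w. Proof. crd; ring. Qed.
Lemma dotZr (u v : V) c : dot u (c *: v) = c * dot u v. Proof. crd; ring. Qed.
Lemma dotNr (u v : V) : dot u (- v) = - dot u v. Proof. crd; ring. Qed.
Lemma dotDl (u v w : V) : dot (v + w) u = dot v u + dot w u. Proof. crd; ring. Qed.
Lemma dotBl (u v w : V) : dot (v - w) u = dot v u - dot w u. Proof. crd; ring. Qed.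
Lemma dotZl (u v : V) c : dot (c *: v) u = c * dot v u. Proof. crd; ring. Qed.
Lemma dotNl (u v : V) : dot (- v) u = - dot v u. Proof. crd; ring. Qed.
Lemma dot0r (u : V) : dot u 0 = 0. Proof. crd; ring. Qed.

Lemma dot_ge0 (u : V) : 0 <= dot u u.
Proof. crd. nra. Qed.

Lemma dot_eq0 (u : V) : dot u u = 0 -> u = 0.
Proof.
crd => h.
have h0 : u 0 i0 = 0 by nra.
have h1 : u 0 i1 = 0 by nra.
have h2 : u 0 i2 = 0 by nra.
by apply: vecP; rewrite mxE.
Qed.

Lemma sphere_neq0 (u : V) : on_sphere u -> u <> 0.
Proof. by rewrite /on_sphere => h h0; move: h; rewrite h0 dot0r => /eqP; rewrite eq_sym oner_eq0. Qed.

Lemma dot_lt1 (u v : V) : on_sphere u -> on_sphere v -> u <> v -> dot u v < 1.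
Proof.
rewrite /on_sphere => hu hv huv.
have h1 : dot (u - v) (u - v) = 2 - 2 * dot u v.
  by rewrite dotBl !dotBr hu hv (dotC v u); ring.
have h2 : dot (u - v) (u - v) != 0.
  by apply/eqP => /dot_eq0 /eqP; rewrite subr_eq0 => /eqP.
have h3 := dot_ge0 (u - v).
rewrite h1 in h2 h3. 
have : 2 - 2 * dot u v > 0 by rewrite lt_neqAle eq_sym h2 h3.
lra.
Qed.

Lemma unit_scale (x y : V) c : on_sphere x -> on_sphere y -> x = c *: y -> x = y \/ x = - y.
Proof.
rewrite /on_sphere => hx hy e.
have : c * c = 1 by move: hx; rewrite e dotZl dotZr hy mulr1.
move=> /eqP; rewrite -expr2 sqrf_eq1 => /orP [] /eqP hc; rewrite e hc.
- by left; rewrite scale1r.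
- by right; rewrite scaleN1r.
Qed.

Lemma par_cross (q z : V) : cross q z = 0 -> (dot q q) *: z = (dot z q) *: q.
Proof.
move=> h.
have e : (dot q q) *: z = (dot z q) *: q + cross (cross q z) q by apply: vecP; crd; ring.
rewrite e h; apply: vecP; crd; ring.
Qed.


Lemma dot_gtm1 (u v : V) : on_sphere u -> on_sphere v -> u <> - v -> -1 < dot u v.
Proof.
move=> hu hv huv.
have hv' : on_sphere (- v) by rewrite /on_sphere dotNl dotNr opprK.
have := dot_lt1 hu hv' huv; rewrite dotNr; lra.
Qed.

Lemma comb_sq (u v : V) A B : on_sphere u -> on_sphere v ->
  dot (A *: u + B *: v) (A *: u + B *: v) = A * A + B * B + 2 * A * B * dot u v.
Proof.
rewrite /on_sphere => hu hv.
rewrite !dotDl !dotDr !dotZl !dotZr hu hv (dotC v u); ring.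
Qed.

Lemma comb_pos (u v : V) A B : on_sphere u -> on_sphere v -> u <> - v ->
  0 <= A -> 0 <= B -> 0 < A + B -> 0 < dot (A *: u + B *: v) (A *: u + B *: v).
Proof.
move=> hu hv huv hA hB hAB.
rewrite comb_sq //.
have := dot_gtm1 hu hv huv => h.
have hAB2 : 0 <= A * B by apply: mulr_ge0.
have e : A * A + B * B + 2 * A * B * dot u v = (A - B) * (A - B) + 2 * (A * B * (1 + dot u v)) by ring.
have e2 : A * A + B * B + 2 * A * B * dot u v = (A + B) * (A + B) - 2 * (A * B * (1 - dot u v)) by ring.
have s1 : 0 <= (A - B) * (A - B) by rewrite -expr2 sqr_ge0.
have s2 : 0 < (A + B) * (A + B) by rewrite mulr_gt0.
case: (ltrgtP (A * B) 0) => [|hp|h0]; first lra.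
- rewrite e; have : 0 < A * B * (1 + dot u v) by rewrite mulr_gt0 //; lra.
  lra.
- by rewrite e2 h0 mul0r mulr0 subr0.
Qed.

Lemma comb_lt1 (u v : V) t : on_sphere u -> on_sphere v -> u <> v -> 0 < t < 1 ->
  dot ((1 - t) *: u + t *: v) ((1 - t) *: u + t *: v) < 1.
Proof.
move=> hu hv huv /andP [t0 t1].
rewrite comb_sq //.
have := dot_lt1 hu hv huv => h.
have : 0 < t * (1 - t) by apply: mulr_gt0; lra.
nra.
Qed.

Lemma sign_cases (a b : R) :
  (forall t, 0 <= t <= 1 -> (1 - t) * a + t * b = 0 -> False) ->
  (0 < a /\ 0 < b) \/ (a < 0 /\ b < 0) \/ (a = 0 /\ b = 0).
Proof.
move=> H.
have ha : a != 0.
  by apply/eqP => ha; apply: (H 0); rewrite ?lexx ?ler01 // ha; ring.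
have hb : b != 0.
  by apply/eqP => hb; apply: (H 1); rewrite ?lexx ?ler01 // hb; ring.
have hab : 0 < a * b.
  rewrite ltNge; apply/negP => hab.
  have hd : a - b != 0.
    apply/negP => /eqP hd.
    have : a = b by lra.
    move=> e; rewrite e in hab ha; move: hab; rewrite -expr2 => hab.
    by move: ha; rewrite -sqrf_eq0; apply/negP/negPn; rewrite eq_le hab sqr_ge0.
  apply: (H (a / (a - b))).
  - have hd2 : 0 < (a - b) ^+ 2 by rewrite exprn_even_gt0.
    have e1 : a / (a - b) = (a * (a - b)) / (a - b) ^+ 2 by field.
    have e2 : 1 - a / (a - b) = (b * (b - a)) / (a - b) ^+ 2 by field.
    apply/andP; split.
    + rewrite e1 divr_ge0 // ?ltW //; nra.
    + rewrite -subr_ge0 e2 divr_ge0 // ?ltW //; nra.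
  - by field.
case: (ltrgtP a 0) => h1.
- right; left; split => //; nra.
- left; split => //; nra.
- by move: ha; rewrite h1 eqxx.
Qed.


Lemma arc_sign (n m p a b : V) :
  n <> 0 -> m <> 0 -> on_sphere p -> dot n p = 0 -> dot m p = 0 ->
  arc_wf (a, b) -> dot m a = 0 -> dot m b = 0 ->
  ~ arc_pt (a, b) p -> ~ arc_pt (a, b) (- p) ->
  (0 < dot n a /\ 0 < dot n b) \/ (dot n a < 0 /\ dot n b < 0) \/
  (dot n a = 0 /\ dot n b = 0).
Proof.
move=> n0 m0 hp np mp [/= ha [hb [hab hab']]] ma mb Np Nmp.
have nn : dot n n != 0 by apply/eqP => /dot_eq0.
case: (cross n m =P 0) => [hc | hc].
- have e := par_cross hc.
  have mn : dot m n != 0.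
    apply/eqP => mn; move: e; rewrite mn scale0r => /eqP.
    by rewrite scaler_eq0 (negbTE nn) /= => /eqP.
  have H : forall x, dot m x = 0 -> dot n x = 0.
    move=> x mx; have := congr1 (fun w => dot w x) e; rewrite /= !dotZl mx mulr0.
    by move=> /esym /eqP; rewrite mulf_eq0 (negbTE mn) /= => /eqP.
  by right; right; split; apply: H.
- apply: sign_cases => t ht e.
  set y := (1 - t) *: a + t *: b.
  have ny : dot n y = 0 by rewrite /y dotDr !dotZr; lra.
  have my : dot m y = 0 by rewrite /y dotDr !dotZr ma mb; lra.
  set w := cross n m.
  have ww : dot w w != 0 by apply/eqP => /dot_eq0.
  have ey : (dot w w) *: y = (dot y w) *: w.
    by rewrite perp_cross ny my !scale0r addr0 subr0.
  have ep : (dot w w) *: p = (dot p w) *: w.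
    by rewrite perp_cross np mp !scale0r addr0 subr0.
  have y0 : y != 0.
    apply/eqP => y0.
    have : 0 < dot y y by apply: comb_pos => //; move: ht => /andP[? ?]; lra.
    by rewrite y0 dot0r ltxx.
  have pw : dot p w != 0.
    apply/eqP => pw; move: ep; rewrite pw scale0r => /eqP.
    by rewrite scaler_eq0 (negbTE ww) /= => /eqP /(sphere_neq0 hp).
  set c := dot y w / dot p w.
  have eyp : y = c *: p.
    apply: (@scalerI _ _ (dot w w)) => //.
    by rewrite ey scalerA mulrC -scalerA ep scalerA /c divfK.
  have c0 : c != 0 by apply/eqP => c0; move: y0; rewrite eyp c0 scale0r eqxx.
  case: (ltrgtP c 0) => hc0; last by move: c0; rewrite hc0 eqxx.
  + apply: Nmp; split; first by rewrite /on_sphere dotNl dotNr opprK.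
    exists t, (- c^-1); split => //; split; first by rewrite oppr_gt0 invr_lt0.
    rewrite -/y eyp scalerA mulNr mulVf // scaleN1r //.
  + apply: Np; split => //.
    exists t, (c^-1); split => //; split; first by rewrite invr_gt0.
    by rewrite -/y eyp scalerA mulVf // scale1r.
Qed.


Lemma no_pos (I : finType) (D : I -> sarc R) (n : V) :
  (forall i, arc_wf (D i)) ->
  (forall i, (exists j, arc_relint (D j) (D i).1) /\ (exists j, arc_relint (D j) (D i).2)) ->
  (forall i, 0 < dot n (D i).1 -> 0 < dot n (D i).2) ->
  (forall i, 0 < dot n (D i).2 -> 0 < dot n (D i).1) ->
  forall i, dot n (D i).1 <= 0 /\ dot n (D i).2 <= 0.
Proof.
move=> wf blk H12 H21.
pose ep (x : I * bool) := if x.2 then (D x.1).1 else (D x.1).2.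
pose P : {pred I * bool} := fun x => 0 < dot n (ep x).
pose F x := dot n (ep x).
suff Hno : forall x, ~~ P x.
  move=> i; split; rewrite leNgt; [exact: (Hno (i, true)) | exact: (Hno (i, false))].
move=> x0; apply/negP => Px0.
case: (@arg_minP _ R _ x0 P F Px0) => x Px Hmin.
have [j [he [t [lam [/andP [t0 t1] [lam0 exe]]]]]] :
    exists j, arc_relint (D j) (ep x).
  by rewrite /ep; case: (x.2); have [[j1 h1] [j2 h2]] := blk x.1; [exists j1 | exists j2].
move: (wf j) => [hu [hv [huv _]]].
set u := (D j).1 in exe hu hv huv; set v := (D j).2 in exe hu hv huv.
have hex : dot n (ep x) = lam * ((1 - t) * dot n u + t * dot n v).
  by rewrite exe dotZr dotDr !dotZr.
have Pxx : 0 < dot n (ep x) := Px.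
have [pu pv] : 0 < dot n u /\ 0 < dot n v.
  case/orP: (orbN (0 < dot n u)) => hu0.
    by split => //; exact: (H12 j hu0).
  case/orP: (orbN (0 < dot n v)) => hv0.
    by split => //; exact: (H21 j hv0).
  rewrite -leNgt in hu0; rewrite -leNgt in hv0.
  exfalso; move: Pxx; rewrite hex; apply/negP; rewrite -leNgt.
  apply: mulr_ge0_le0; first exact: ltW.
  have : 0 <= 1 - t by lra.
  nra.
have mu : F x <= dot n u by apply: (Hmin (j, true)).
have mv : F x <= dot n v by apply: (Hmin (j, false)).
have lt1 := comb_lt1 hu hv huv (t := t); rewrite t0 t1 in lt1.
have sph : dot (ep x) (ep x) = 1 := he.
rewrite exe dotZl dotZr mulrA in sph.
set s := dot _ _ in sph lt1.
have lam1 : 1 < lam.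
  rewrite ltNge; apply/negP => hl.
  have s0 : 0 <= s by apply: dot_ge0.
  have : lam * lam * s <= s.
    by rewrite -[X in _ <= X]mul1r ler_wpM2r // -[1]mulr1 ler_pM // ltW.
  rewrite sph; move: (lt1 isT); lra.
have hS : F x <= (1 - t) * dot n u + t * dot n v.
  have e : F x = (1 - t) * F x + t * F x by ring.
  rewrite e lerD // ?ler_wpM2l //; [lra | exact: ltW].
have : lam * F x <= F x by rewrite {2}/F hex ler_wpM2l // ltW.
have : 0 < F x := Pxx.
nra.
Qed.


Lemma all_zero_false (I : finType) (D : I -> sarc R) (n : V) (i0 : I) :
  n <> 0 ->
  (forall i, arc_wf (D i)) ->
  (forall i j, i <> j -> forall x, arc_relint (D i) x -> ~ arc_relint (D j) x) ->
  (forall i, exists j, arc_relint (D j) (D i).1) ->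
  (forall i, dot n (D i).1 = 0 /\ dot n (D i).2 = 0) -> False.
Proof.
move=> n0 wf disj blk zer.
have [j [ha [t [lam [/andP [t0 t1] [lam0 exe]]]]]] := blk i0.
have [_ [hb [hab hab']]] := wf i0.
have [hu [hv [huv huv']]] := wf j.
have [na nb] := zer i0.
have [nu nv] := zer j.
move: exe ha hb hab hab' na nb.
set a := (D i0).1; set b := (D i0).2 => exe ha hb hab hab' na nb.
have ji : j <> i0.
  move=> eji; move: exe; rewrite eji -/a -/b => exe.
  have k0 : lam * t != 0 by rewrite mulf_neq0 // gt_eqF.
  have eb : b = ((1 - lam * (1 - t)) / (lam * t)) *: a.
    apply: (@scalerI _ _ (lam * t)) => //.
    rewrite scalerA [X in X *: a]mulrC divfK //.
    have e : (lam * t) *: b = a - (lam * (1 - t)) *: a.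
      by rewrite {1}exe; apply: vecP; crd; ring.
    by rewrite e; apply: vecP; crd; ring.
  case: (unit_scale hb ha eb) => e.
  - by apply: hab.
  - by apply: hab'; rewrite e opprK.
move: exe hu hv huv huv' nu nv.
set u := (D j).1; set v := (D j).2 => exe hu hv huv huv' nu nv.
set d := det u v n.
have nn : 0 < dot n n.
  by rewrite lt_neqAle dot_ge0 andbT eq_sym; apply/eqP => /dot_eq0.
have d0 : d != 0.
  have e := det_mul u v n u v n.
  rewrite -/d hu hv !(dotC _ n) nu nv in e.
  have : (dot u v) ^+ 2 < 1.
    have := dot_lt1 hu hv huv; have := dot_gtm1 hu hv huv'; nra.
  move=> h; apply/eqP => d0; rewrite d0 mulr0 in e.
  have : 0 < (1 - dot u v ^+ 2) * dot n n by rewrite mulr_gt0 // subr_gt0.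
  rewrite expr2 (dotC v u) in e *; lra.
have dvb : det u v b = 0.
  have e := det_mul u v b u v n.
  rewrite -/d !(dotC _ n) nu nv nb in e.
  move: e; rewrite !mulr0 !mul0r !subrr !mulr0 !addr0 subr0 => /eqP.
  by rewrite mulf_eq0 (negbTE d0) orbF => /eqP.
set al := det b v n / d.
set be := det u b n / d.
have eb : b = al *: u + be *: v.
  apply: (@scalerI _ _ d) => //.
  have e : d *: b = det b v n *: u + det u b n *: v + det u v b *: n.
    by rewrite /d; apply: vecP; crd; ring.
  rewrite e dvb scale0r addr0 scalerDr !scalerA /al /be !(mulrC d) !divfK //.
set A0 := lam * (1 - t).
set B0 := lam * t.
have A00 : 0 < A0 by rewrite mulr_gt0 // subr_gt0.
have B00 : 0 < B0 by rewrite mulr_gt0.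
have ea : a = A0 *: u + B0 *: v by rewrite exe /A0 /B0; apply: vecP; crd; ring.
set s1 := A0 / (2 * (A0 + `|al|)).
set s2 := B0 / (2 * (B0 + `|be|)).
have nal := ler_norm (- al); rewrite normrN in nal.
have nbe := ler_norm (- be); rewrite normrN in nbe.
have hal := normr_ge0 al.
have hbe := normr_ge0 be.
have s1p : 0 < s1 by rewrite divr_gt0 // mulr_gt0 //; lra.
have s2p : 0 < s2 by rewrite divr_gt0 // mulr_gt0 //; lra.
have s1e : s1 * (A0 + `|al|) = A0 / 2.
  by rewrite /s1; field; rewrite gt_eqF //; lra.
have s2e : s2 * (B0 + `|be|) = B0 / 2 by rewrite /s2; field; rewrite gt_eqF //; lra.
have s1h : s1 <= 1 / 2.
  have : s1 * A0 <= A0 / 2 by rewrite -s1e; apply: ler_wpM2l; [exact: ltW | lra].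
  nra.
have s2h : s2 <= 1 / 2.
  have : s2 * B0 <= B0 / 2 by rewrite -s2e; apply: ler_wpM2l; [exact: ltW | lra].
  nra.
set s := s1 * s2.
have sp : 0 < s by rewrite mulr_gt0.
have ss1 : s <= s1 by rewrite /s ler_piMr // ?ltW //; lra.
have ss2 : s <= s2 by rewrite /s ler_piMl // ?ltW //; lra.
set A := (1 - s) * A0 + s * al.
set B := (1 - s) * B0 + s * be.
have Ap : 0 < A.
  have : s * (A0 + `|al|) <= A0 / 2 by rewrite -s1e ler_wpM2r // ?ltW //; lra.
  rewrite /A; nra.
have Bp : 0 < B.
  have : s * (B0 + `|be|) <= B0 / 2 by rewrite -s2e ler_wpM2r // ?ltW //; lra.
  rewrite /B; nra.
set z := (1 - s) *: a + s *: b.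
have ez : z = A *: u + B *: v by rewrite /z /A /B ea eb; apply: vecP; crd; ring.
have zz : 0 < dot z z by rewrite ez comb_pos // ?ltW //; lra.
set r := Num.sqrt (dot z z).
have rp : 0 < r by rewrite sqrtr_gt0.
have r2 : r * r = dot z z by rewrite -expr2 sqr_sqrtr // ltW.
set x := r^-1 *: z.
have hx : on_sphere x.
  by rewrite /on_sphere /x dotZl dotZr -r2; field; rewrite gt_eqF.
apply: (disj i0 j (fun e => ji (esym e)) x).
- split => //; exists s, r^-1; split; first by apply/andP; split => //; lra.
  by split; rewrite ?invr_gt0.
- split => //; exists (B / (A + B)), (r^-1 * (A + B)); split.
    by apply/andP; split; [rewrite divr_gt0 //; lra | rewrite ltr_pdivrMr; lra].
  split; first by rewrite mulr_gt0 ?invr_gt0 //; lra.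
  have hAB : A + B != 0 by rewrite gt_eqF //; lra.
  have hr : r != 0 by rewrite gt_eqF.
  by rewrite /x ez; apply: vecP; crd; field; rewrite hAB hr.
Qed.


Lemma lagrange (w c : V) : dot w w * dot c c - dot w c ^+ 2 = dot (cross w c) (cross w c).
Proof. crd; ring. Qed.

Lemma det_bound (w a b : V) : on_sphere a -> on_sphere b -> det w a b ^+ 2 <= dot w w.
Proof.
rewrite /on_sphere => ha hb.
have e : det w a b = dot w (cross a b) by crd; ring.
have l1 := lagrange w (cross a b).
have l2 := lagrange a b.
rewrite ha hb mul1r in l2.
have g1 := dot_ge0 (cross w (cross a b)).
have g2 := dot_ge0 (cross a b).
have g3 := dot_ge0 w.
have g4 : 0 <= dot a b ^+ 2 by rewrite sqr_ge0.
rewrite e; nra.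
Qed.

Lemma sum_pick (k : nat) (q : 'I_k -> V) (m0 : 'I_k) (c : R) :
  \sum_(m < k) (((m == m0)%:R * c) *: q m) = c *: q m0.
Proof.
rewrite (bigD1 m0) //= eqxx mul1r big1 ?addr0 // => m /negbTE ->.
by rewrite mul0r scale0r.
Qed.

Lemma coef_pos (D mu de : R) : D != 0 -> 0 < mu -> de ^+ 2 < (mu * D) ^+ 2 ->
  0 < (mu * D + de) / D.
Proof.
move=> D0 mu0 h.
have e : (mu * D + de) / D = ((mu * D + de) * D) / (D ^+ 2) by field.
have D2 : 0 < D ^+ 2 by rewrite exprn_even_gt0.
rewrite e divr_gt0 //.
have hD : 0 < D * D by rewrite -expr2.
rewrite !expr2 in h D2.
rewrite ltNge; apply/negP => hn.
have h1 : de * D <= - (mu * (D * D)) by nra.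
have h2 : 0 < mu * (D * D) by rewrite mulr_gt0.
nra.
Qed.

Lemma interior3 (k : nat) (q : 'I_k -> V) (m1 m2 m3 : 'I_k) :
  on_sphere (q m1) -> on_sphere (q m2) -> on_sphere (q m3) ->
  det (q m1) (q m2) (q m3) != 0 -> sph_nonempty_interior (sph_hull q).
Proof.
move=> h1 h2 h3.
move: h1 h2 h3; set Q1 := q m1; set Q2 := q m2; set Q3 := q m3 => h1 h2 h3 D0.
set D := det Q1 Q2 Q3 in D0.
set y0 := Q1 + Q2 + Q3.
have y00 : y0 != 0.
  apply/eqP => y00.
  have : det Q1 Q2 y0 = D by rewrite /y0 /D; crd; ring.
  by rewrite y00 => e; move: D0; rewrite -e; crd; rewrite !mulr0 !addr0 eqxx.
have yy : 0 < dot y0 y0.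
  by rewrite lt_neqAle dot_ge0 andbT eq_sym; apply/eqP => /dot_eq0 /eqP; apply/negP.
set r := Num.sqrt (dot y0 y0).
have rp : 0 < r by rewrite sqrtr_gt0.
have r2 : r * r = dot y0 y0 by rewrite -expr2 sqr_sqrtr // ltW.
set mu := r^-1.
have mup : 0 < mu by rewrite invr_gt0.
set x0 := mu *: y0.
have hx0 : on_sphere x0.
  by rewrite /on_sphere /x0 dotZl dotZr -r2 /mu; field; rewrite gt_eqF.
set e := (mu * D) ^+ 2.
have ep : 0 < e by rewrite exprn_even_gt0 // mulf_neq0 // gt_eqF.
have key : forall y, on_sphere y -> dot (y - x0) (y - x0) < e -> sph_hull q y.
  move=> y hy hd.
  set w := y - x0.
  have b1 : det w Q2 Q3 ^+ 2 < e by apply: le_lt_trans (det_bound w h2 h3) hd.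
  have b2 : det w Q3 Q1 ^+ 2 < e by apply: le_lt_trans (det_bound w h3 h1) hd.
  have b3 : det w Q1 Q2 ^+ 2 < e by apply: le_lt_trans (det_bound w h1 h2) hd.
  have e1 : det y Q2 Q3 = mu * D + det w Q2 Q3 by rewrite /w /x0 /y0 /D; crd; ring.
  have e2 : det Q1 y Q3 = mu * D + det w Q3 Q1 by rewrite /w /x0 /y0 /D; crd; ring.
  have e3 : det Q1 Q2 y = mu * D + det w Q1 Q2 by rewrite /w /x0 /y0 /D; crd; ring.
  set c1 := det y Q2 Q3 / D.
  set c2 := det Q1 y Q3 / D.
  set c3 := det Q1 Q2 y / D.
  have c1p : 0 < c1 by rewrite /c1 e1 coef_pos.
  have c2p : 0 < c2 by rewrite /c2 e2 coef_pos.
  have c3p : 0 < c3 by rewrite /c3 e3 coef_pos.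
  have ey : y = c1 *: Q1 + c2 *: Q2 + c3 *: Q3.
    apply: (@scalerI _ _ D) => //.
    rewrite !scalerDr !scalerA /c1 /c2 /c3 !(mulrC D) !divfK //.
    by rewrite /D; apply: vecP; crd; ring.
  split => //.
  exists (fun m => (m == m1)%:R * c1 + (m == m2)%:R * c2 + (m == m3)%:R * c3); split.
    move=> m; rewrite !addr_ge0 // mulr_ge0 // ?ler0n // ltW //.
  rewrite (eq_bigr (fun m => ((m == m1)%:R * c1) *: q m + ((m == m2)%:R * c2) *: q m
                              + ((m == m3)%:R * c3) *: q m)); last first.
    by move=> m _; rewrite !scalerDl.
  by rewrite !big_split /= !sum_pick.
exists x0; split; first by apply: key => //; rewrite subrr dot0r.
exists e; split => //.
Qed.


Lemma arc_pt1 (a b : V) : on_sphere a -> arc_pt (a, b) a.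
Proof.
move=> ha; split => //; exists 0, 1; split; first by rewrite lexx ler01.
by split; [exact: ltr01 | rewrite /= scale1r subr0 scale1r scale0r addr0].
Qed.

Lemma arc_pt2 (a b : V) : on_sphere b -> arc_pt (a, b) b.
Proof.
move=> hb; split => //; exists 1, 1; split; first by rewrite lexx ler01.
by split; [exact: ltr01 | rewrite /= scale1r subrr scale0r scale1r add0r].
Qed.

Lemma perp_exists (q : V) : q <> 0 -> exists n : V, n <> 0 /\ dot n q = 0.
Proof.
move=> q0.
case: (cross q (mkv 1 0 0) =P 0) => h0; last first.
  by exists (cross q (mkv 1 0 0)); split => //; crd; ring.
case: (cross q (mkv 0 1 0) =P 0) => h1; last first.
  by exists (cross q (mkv 0 1 0)); split => //; crd; ring.
exfalso; apply: q0.
have a1 := congr1 (fun w : V => w 0 i1) h0.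
have a2 := congr1 (fun w : V => w 0 i2) h0.
have b0 := congr1 (fun w : V => w 0 i2) h1.
move: a1 a2 b0; crd => a1 a2 b0.
apply: vecP; rewrite mxE; lra.
Qed.

Lemma exists3 (k : nat) (p : 'I_k -> V) : (forall m, on_sphere (p m)) ->
  ~ (exists n : V, n <> 0 /\ forall m, great_circle n (p m)) ->
  exists m1 m2 m3, det (p m1) (p m2) (p m3) != 0.
Proof.
move=> hs Hn; apply: NNPP => Hno; apply: Hn.
have Hz : forall m1 m2 m3, det (p m1) (p m2) (p m3) = 0.
  move=> m1 m2 m3; apply/eqP; apply/negPn/negP => h; apply: Hno.
  by exists m1, m2, m3.
case: (pickP (fun _ : 'I_k => true)) => [m1 _ | none]; last first.
  exists (mkv 1 0 0); split; last by move=> m; have := none m.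
  move=> h; have := congr1 (fun w : V => w 0 i0) h; crd => /eqP; rewrite oner_eq0.
  by [].
case: (classic (exists m2, cross (p m1) (p m2) <> 0)) => [[m2 hc] | hno].
  exists (cross (p m1) (p m2)); split => // m; split => //.
  exact: (Hz m1 m2 m).
have par : forall m, p m = dot (p m) (p m1) *: p m1.
  move=> m; have hc : cross (p m1) (p m) = 0.
    by apply: NNPP => hc; apply: hno; exists m.
  by have := par_cross hc; rewrite (hs m1) scale1r.
have [n [n0 nq]] := perp_exists (sphere_neq0 (hs m1)).
exists n; split => // m; split => //.
by rewrite par dotZr nq mulr0.
Qed.

End S.

Theorem mainTheorem13 (R : realType) (I : finType) (D : I -> sarc R) (k : nat)
    (p : 'I_k -> vec R) (f : I -> 'I_k) :
  spherical_diagram D -> k_oriented_by D p f ->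
  (~ exists n : vec R, n <> 0 /\ forall m, great_circle n (p m)) /\
  (forall s : 'I_k -> bool, sph_nonempty_interior (sph_hull (attractor p s))).
Proof.
move=> [cardI [wf [disj blk]]] [hs [pinj [nanti hor]]].
have part1 : ~ exists n : vec R, n <> 0 /\ forall m, great_circle n (p m).
  move=> [n [n0 hn]].
  have A : forall i, (0 < dot n (D i).1 /\ 0 < dot n (D i).2) \/
      (dot n (D i).1 < 0 /\ dot n (D i).2 < 0) \/
      (dot n (D i).1 = 0 /\ dot n (D i).2 = 0).
    move=> i; have [[m [m0 [gcp garc]]] [Np Nmp]] := hor i.
    have wfi := wf i.
    move: Np Nmp garc wfi; case: (D i) => a b /= Np Nmp garc wfi.
    have [ha [hb _]] := wfi.
    apply: (arc_sign n0 m0 (hs (f i)) (hn (f i)).2 gcp.2 wfi) => //.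
    - exact: (garc a (arc_pt1 b ha)).2.
    - exact: (garc b (arc_pt2 a hb)).2.
  have blk1 : forall i, (exists j, arc_relint (D j) (D i).1) /\
      (exists j, arc_relint (D j) (D i).2) := blk.
  have P1 := no_pos wf blk1
    (fun i h => ltac:(case: (A i) => [[] //|[[]|[]]]; lra))
    (fun i h => ltac:(case: (A i) => [[] //|[[]|[]]]; lra)).
  have P2 := no_pos (n := - n) wf blk1
    (fun i h => ltac:(rewrite !dotNl in h *; case: (A i) => [[]|[[] //|[]]]; lra))
    (fun i h => ltac:(rewrite !dotNl in h *; case: (A i) => [[]|[[] //|[]]]; lra)).
  case/card_gt0P: cardI => i0 _.
  apply: (@all_zero_false R I D n i0 n0 wf disj (fun i => (blk i).1)).
  move=> i; have [a1 a2] := P1 i; have [b1 b2] := P2 i.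
  rewrite !dotNl in b1 b2; split; lra.
split => // s.
have [m1 [m2 [m3 hd]]] := exists3 hs part1.
have att : forall m, attractor p s m = (if s m then 1 else -1) *: p m.
  by move=> m; rewrite /attractor; case: (s m); rewrite ?scale1r ?scaleN1r.
have hsa : forall m, on_sphere (attractor p s m).
  move=> m; rewrite /attractor; case: (s m) => //.
  by rewrite /on_sphere dotNl dotNr opprK; apply: hs.
apply: (interior3 (m1 := m1) (m2 := m2) (m3 := m3)) => //.
rewrite !att.
set c1 := (if s m1 then _ else _); set c2 := (if s m2 then _ else _);
  set c3 := (if s m3 then _ else _).
have e : det (c1 *: p m1) (c2 *: p m2) (c3 *: p m3) = c1 * c2 * c3 * det (p m1) (p m2) (p m3).
  by rewrite /det /cross ?(dotE, mkv0, mkv1, mkv2, mxE); ring.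
have cn : forall b : bool, (if b then 1 else -1 : R) != 0.
  by case; rewrite ?oppr_eq0 oner_eq0.
by rewrite e !mulf_neq0 // ?cn.
Qed.
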